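(* Let $(\mathcal{X},\rho)$ be a metric space, $\eta:\mathcal{X}\to\mathcal{Y}$ a function, and $x\in\mathcal{X}$. For any $0<r<\mathrm{margin}_\eta(x)/3$, the open ball $B(x,r)$ is mutually-labeling for $\eta$.
   Context: $\mathrm{margin}_\eta(x)=\inf\{\rho(x,x'):\eta(x')\ne\eta(x)\}$ (infimum of empty set $=+\infty$). A set $U$ is mutually-labeling for $\eta$ if $\mathrm{diam}(U)<\mathrm{margin}_\eta(x)$ for all $x\in U$, where $\mathrm{diam}(U)=\sup_{z,z'\in U}\rho(z,z')$. *)

(* Defs.v *)
From mathcomp Require Import all_boot all_order all_algebra.
From mathcomp Require Import all_classical all_reals ereal.
Set Implicit Arguments. Unset Strict Implicit. Unset Printing Implicit Defensive.
Import Order.TTheory GRing.Theory Num.Theory.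
Local Open Scope classical_set_scope.
Local Open Scope ring_scope.

Definition is_metric (R : realType) (X : Type) (rho : X -> X -> R) : Prop :=
  [/\ (forall x y, 0 <= rho x y),
      (forall x y, rho x y = 0 <-> x = y),
      (forall x y, rho x y = rho y x) &
      (forall x y z, rho x z <= rho x y + rho y z)].

(* margin_eta(x) = inf { rho(x,x') : eta x' <> eta x }, inf of empty = +oo *)
Definition margin (R : realType) (X Y : Type) (rho : X -> X -> R)
  (eta : X -> Y) (x : X) : \bar R :=
  ereal_inf [set (rho x x')%:E | x' in [set x' | eta x' <> eta x]].

Definition diam (R : realType) (X : Type) (rho : X -> X -> R) (U : set X)
  : \bar R :=
  ereal_sup [set (rho z z')%:E | z in U & z' in U].

Definition mutually_labeling (R : realType) (X Y : Type) (rho : X -> X -> R)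
  (eta : X -> Y) (U : set X) : Prop :=
  forall x, U x -> (diam rho U < margin rho eta x)%E.

Definition open_ball (R : realType) (X : Type) (rho : X -> X -> R)
  (x : X) (r : R) : set X := [set y | rho x y < r].

(* Main.v *)
Require Import Defs.
From mathcomp Require Import all_boot all_order all_algebra.
From mathcomp Require Import all_classical all_reals ereal.
From mathcomp Require Import lra.
Import Order.TTheory GRing.Theory Num.Theory.
Local Open Scope ring_scope.

Theorem lemma3 (R : realType) (X Y : Type) (rho : X -> X -> R)
  (hrho : is_metric rho) (eta : X -> Y) (x : X) (r : R) :
  0 < r -> (r%:E < margin rho eta x / 3%:E)%E ->
  mutually_labeling rho eta (open_ball rho x r).
Proof.
case: hrho => h0 h1 hs ht.
move=> r0 hm y hy.
rewrite /open_ball /= in hy.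
set m := margin rho eta x in hm *.
have hm3 : forall z, (m <= (rho x z)%:E)%E -> 3 * r < rho x z.
  have e3 : ((3%:E)^-1 = (3^-1)%:E :> \bar R)%E by rewrite inver pnatr_eq0.
  move: hm; rewrite e3; case: m => [s| |] /=.
  - rewrite -EFinM lte_fin => hs3 z; rewrite lee_fin => hz.
    have : r * 3 < s by rewrite -ltr_pdivlMr //.
    lra.
  - by move=> _ z; rewrite leye_eq.
  - rewrite mulNyr gtr0_sg ?invr_gt0 // mul1e => h; exfalso; move: h.
    by rewrite ltNge leNye.
have lbm : forall z, eta z <> eta x -> (m <= (rho x z)%:E)%E.
  move=> z hz; apply: ereal_inf_lbound; by exists z.
have eyx : eta y = eta x.
  apply: contrapT => hne; have := hm3 _ (lbm _ hne); lra.
have hd : (diam rho (open_ball rho x r) <= (2 * r)%:E)%E.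
  apply: ge_ereal_sup => _ [z hz [z' hz' <-]].
  rewrite lee_fin; rewrite /open_ball /= in hz hz'.
  have := ht z x z'; rewrite (hs z x); lra.
apply: (le_lt_trans hd).
rewrite /margin eyx.
apply: (@lt_le_trans _ _ ((3 * r - rho x y)%:E)).
  rewrite lte_fin; move: hy r0; clear; lra.
apply: le_ereal_inf_tmp.
move=> _ [z hz <-].
have := hm3 _ (lbm _ hz).
have := ht x y z.
rewrite lee_fin; move: hy; clear; lra.
Qed.
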